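(* Let $q\ge2$, $k\in[1:q]$, and let $\mathbf{u}$ be a probability distribution on $[1:q]$ with $|\mathrm{supp}(\mathbf{u})|=k$. Then for all sufficiently large $n$, $$M_{n,\mathbf{u}}(\mathbf{t})\le\frac{2}{n^{(k-1)/2}\sqrt{\prod_{i\in\mathrm{supp}(\mathbf{u})}u_i}}\qquad\forall\mathbf{t}\in\mathcal{N}_{q,n}.$$
   Context: $\mathcal{N}_{q,n}=\{\mathbf{t}\in\mathbb{Z}_{\ge0}^q:\sum_it_i=n\}$; $M_{n,\mathbf{u}}(\mathbf{t})=\frac{n!}{t_1!\cdots t_q!}\prod_iu_i^{t_i}$ (with $0^0=1$); $\mathrm{supp}(\mathbf{u})=\{i:u_i>0\}$. *)

(* Defs.v *)
From HB Require Import structures.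
From mathcomp Require Import all_boot all_order all_algebra.
From mathcomp Require Import reals exp.
Set Implicit Arguments. Unset Strict Implicit. Unset Printing Implicit Defensive.
Import Order.TTheory GRing.Theory Num.Theory.
Local Open Scope ring_scope.

Definition in_Nqn (q n : nat) (t : 'I_q -> nat) : Prop := (\sum_(i < q) t i)%N = n.

Definition is_prob_dist (R : realType) (q : nat) (u : 'I_q -> R) : Prop :=
  (forall i, 0 <= u i) /\ \sum_(i < q) u i = 1.

Definition supp (R : realType) (q : nat) (u : 'I_q -> R) : {set 'I_q} :=
  [set i | 0 < u i].

(* M_{n,u}(t) = n!/(t_1!...t_q!) * prod u_i^{t_i}  (with 0^0 = 1) *)
Definition multinom (R : realType) (q n : nat) (u : 'I_q -> R) (t : 'I_q -> nat) : R :=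
  (n`!)%:R / (\prod_(i < q) ((t i)`!)%:R) * \prod_(i < q) u i ^+ t i.

(* Main.v *)
Require Import Defs.
From HB Require Import structures.
From mathcomp Require Import all_boot all_order all_algebra.
From mathcomp Require Import reals exp.
From mathcomp Require Import classical_sets boolp functions interval_inference topology normedtype sequences derive realfun.
From mathcomp Require Import ring lra zify.
Import Order.TTheory GRing.Theory Num.Theory.
Import numFieldNormedType.Exports.
Local Open Scope ring_scope.
Section S.
Variable R : realType.

Lemma ge_from_deriv (f df : R -> R) :
  (forall x : R, 0 < x -> is_derive x 1 f (df x)) ->
  (forall x : R, 1 < x -> 0 <= df x) -> forall x : R, 1 <= x -> f 1 <= f x.
Proof.
move=> Hd Hp x x1.
have Hdv : forall y, 0 < y -> derivable f y 1.
  by move=> y y0; have := Hd y y0 => H; exact: ex_derive.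
apply: (@ger0_derive1_ndecry R f 1) => //.
- move=> y; rewrite in_itv /= andbT => y1; apply: Hdv; lra.
- move=> y; rewrite in_itv /= andbT => y1.
  have := Hd y ltac:(lra) => H.
  by rewrite derive1E derive_val; apply: Hp.
- apply: derivable_within_continuous => y; rewrite in_itv /= andbT => y1.
  apply: Hdv; lra.
Qed.

Lemma dh (x : R) : 0 < x -> is_derive x 1 (fun x : R => (1 + x) * ln x - 2 * (x - 1)) (ln x + (1 + x) / x - 2).
Proof.
move=> x0.
have H := is_derive1_ln x0.
have -> : (fun x : R => (1 + x) * ln x - 2 * (x - 1)) = (((fun x : R => 1 + x) * (@ln R)) - (fun x : R => 2 * (x - 1)) : R -> R).
  by apply/funext => y.
apply: is_derive_eq.
rewrite /= !add0r !subr0 !mulr1.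
have sc : forall a b : R, a *: b = a * b by [].
rewrite !sc !mulr1; lra.
Qed.

Lemma dg (x : R) : 0 < x -> is_derive x 1 (fun x : R => 2 * (x - 1) + (x - 1) ^+ 3 / 2 - (1 + x) * ln x)
   (2 + 3 * (x - 1) ^+ 2 / 2 - (ln x + (1 + x) / x)).
Proof.
move=> x0.
have H := is_derive1_ln x0.
have -> : (fun x : R => 2 * (x - 1) + (x - 1) ^+ 3 / 2 - (1 + x) * ln x) = 
  (((fun x : R => 2 * (x - 1)) + (fun x : R => 2^-1 * (x - 1)) ^+ 3 * (fun=> 4)) - ((fun x : R => 1 + x) * (@ln R)) : R -> R).
  apply/funext => y.
  by rewrite !fctE /= exprMn; field.
apply: is_derive_eq.
rewrite /= !add0r !subr0 !mulr1.
have sc : forall a b : R, a *: b = a * b by [].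
rewrite !sc !mulr1 /= mulr0 add0r.
rewrite exprMn; field.
exact: lt0r_neq0.
Qed.

Lemma ln_ge {y : R} : 0 < y -> 1 - y^-1 <= ln y.
Proof.
move=> y0.
have yi : 0 < y^-1 by rewrite invr_gt0.
have := le_ln1Dx (x := y^-1 - 1) ltac:(lra).
rewrite addrC subrK lnV ?posrE //; lra.
Qed.

Lemma ln_le {y : R} : 0 < y -> ln y <= y - 1.
Proof.
move=> y0; have := le_ln1Dx (x := y - 1) ltac:(lra).
by rewrite addrC subrK.
Qed.

Lemma ln_lo (x : R) : 1 <= x -> 2 * (x - 1) <= (1 + x) * ln x.
Proof.
move=> x1.
have := @ge_from_deriv _ _ dh _ x x1.
rewrite ln1 !mulr0 subrr mulr0 subr0 => H.
rewrite -subr_ge0; apply: H.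
move=> y y1.
have y0 : 0 < y by lra.
have := ln_ge y0.
have -> : (1 + y) / y = y^-1 + 1 by rewrite mulrDl mul1r divff // lt0r_neq0.
lra.
Qed.

Lemma ln_hi (x : R) : 1 <= x -> (1 + x) * ln x <= 2 * (x - 1) + (x - 1) ^+ 3 / 2.
Proof.
move=> x1.
have := @ge_from_deriv _ _ dg _ x x1.
rewrite ln1 !mulr0 subrr mulr0 expr0n /= mul0r !addr0 subr0 => H.
rewrite -subr_ge0; apply: H.
move=> y y1.
have y0 : 0 < y by lra.
have := ln_le y0.
have -> : (1 + y) / y = y^-1 + 1 by rewrite mulrDl mul1r divff // lt0r_neq0.
set w := y^-1.
have yw : y * w = 1 by rewrite /w divff // lt0r_neq0.
have w1 : w <= 1 by rewrite /w invr_le1 // ?unitfE ?lt0r_neq0 //; lra.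
have w0 : 0 < w by rewrite /w invr_gt0.
have e : 2 - y - w = - ((y - 1) ^+ 2 * w).
  have -> : (y - 1) ^+ 2 * w = y * (y * w) - 2 * (y * w) + w by ring.
  rewrite yw; ring.
have h2 : 0 <= (y - 1) ^+ 2 * (1 - w) by apply: mulr_ge0; [exact: sqr_ge0| lra].
nra.
Qed.

Definition rho (m : nat) : R :=
  (m`!%:R) ^+ 2 * expR (2 * m%:R) / m%:R ^+ (2 * m + 1).

Lemma key_lo (a : R) : 1 <= a -> 2 <= (2 * a + 1) * ln ((a + 1) / a).
Proof.
move=> a1.
have a0 : 0 < a by lra.
have x1 : 1 <= (a + 1) / a by rewrite ler_pdivlMr //; lra.
have := ln_lo _ x1.
have e1 : (a + 1) / a - 1 = a^-1 by field; lra.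
have e2 : 2 * a + 1 = a * (1 + (a + 1) / a) by field; lra.
rewrite e1 e2 -mulrA => h.
have := ler_wpM2l (ltW a0) h.
by rewrite mulrCA divff ?mulr1 // lt0r_neq0.
Qed.

Lemma key_hi (a : R) : 1 <= a ->
  (2 * a + 1) * ln ((a + 1) / a) <= 2 + (a * (a + 1))^-1.
Proof.
move=> a1.
have a0 : 0 < a by lra.
have x1 : 1 <= (a + 1) / a by rewrite ler_pdivlMr //; lra.
have := ln_hi _ x1.
have e1 : (a + 1) / a - 1 = a^-1 by field; lra.
have e2 : 2 * a + 1 = a * (1 + (a + 1) / a) by field; lra.
rewrite e1 e2 -mulrA => h.
apply: (le_trans (ler_wpM2l (ltW a0) h)).
have -> : a * (2 * a^-1 + a^-1 ^+ 3 / 2) = 2 + (2 * a * a)^-1 by field; lra.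
rewrite lerD2l lef_pV2 ?posrE; [nra | nra | nra].
Qed.

Lemma powx_eq (m : nat) : (0 < m)%N ->
  ((m.+1)%:R / m%:R) ^+ (2 * m + 1) = expR ((2 * m%:R + 1) * ln ((m%:R + 1) / m%:R)) :> R.
Proof.
move=> m0.
have a0 : 0 < m%:R :> R by rewrite ltr0n.
have -> : 2 * m%:R + 1 = (2 * m + 1)%N%:R :> R by rewrite natrD natrM.
rewrite expRM_natl lnK ?posrE; last by apply: divr_gt0 => //; lra.
by rewrite -natr1 addrC.
Qed.

Lemma pow_lo (m : nat) : (0 < m)%N -> expR 2 <= ((m.+1)%:R / m%:R) ^+ (2 * m + 1) :> R.
Proof.
move=> m0; rewrite powx_eq // ler_expR; apply: key_lo.
by rewrite ler1n.
Qed.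

Lemma pow_hi (m : nat) : (0 < m)%N ->
  ((m.+1)%:R / m%:R) ^+ (2 * m + 1) <= expR (2 + (m%:R * (m%:R + 1))^-1) :> R.
Proof.
move=> m0; rewrite powx_eq // ler_expR; apply: key_hi.
by rewrite ler1n.
Qed.

Lemma rho_step (m : nat) : (0 < m)%N ->
  rho m.+1 = rho m * expR 2 / ((m.+1)%:R / m%:R) ^+ (2 * m + 1).
Proof.
move=> m0.
have a0 : 0 < m%:R :> R by rewrite ltr0n.
rewrite /rho factS natrM -[m.+1]addn1 !natrD expr_div_n.
have -> : (2 * (m + 1) + 1 = (2 * m + 1) + 2)%N by lia.
rewrite exprD mulrDr mulr1 expRD.
have h1 : (m%:R + 1%:R : R) ^+ (2 * m + 1) != 0 by rewrite expf_neq0 // lt0r_neq0 //; lra.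
have h2 : (m%:R : R) ^+ (2 * m + 1) != 0 by rewrite expf_neq0 // lt0r_neq0.
have h3 : expR 2 != 0 :> R by rewrite lt0r_neq0 // expR_gt0.
field.
rewrite h1 h2 /=; rewrite lt0r_neq0 //; lra.
Qed.

Lemma rho_ge0 m : 0 <= rho m.
Proof.
by rewrite /rho divr_ge0 ?mulr_ge0 ?exprn_ge0 ?ler0n // ltW // expR_gt0.
Qed.

Lemma rho_decr m : (0 < m)%N -> rho m.+1 <= rho m.
Proof.
move=> m0; rewrite rho_step //.
have hp : 0 < ((m.+1)%:R / m%:R) ^+ (2 * m + 1) :> R.
  by rewrite exprn_gt0 // divr_gt0 // ltr0n.
rewrite -mulrA; apply: ler_piMr; first exact: rho_ge0.
rewrite ler_pdivrMr // mul1r; exact: pow_lo.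
Qed.

Lemma rho_mono a b : (0 < a)%N -> (a <= b)%N -> rho b <= rho a.
Proof.
move=> a0; elim: b => [|b IH]; first by rewrite leqn0 => /eqP ->.
rewrite leq_eqVlt => /orP [/eqP -> //| ab].
apply: le_trans (IH ab); apply: rho_decr; lia.
Qed.

Lemma rho1 : rho 1 = expR 2.
Proof. by rewrite /rho mulr1 factS fact0 muln1 mulr1n !expr1n mul1r divr1. Qed.

Lemma rho_lo m : (0 < m)%N -> expR (1 + m%:R^-1) <= rho m.
Proof.
elim: m => [//|m IH] _.
case: (posnP m) => [-> | m0]; first by rewrite rho1 invr1.
rewrite rho_step //.
have hp : 0 < ((m.+1)%:R / m%:R) ^+ (2 * m + 1) :> R.
  by rewrite exprn_gt0 // divr_gt0 // ltr0n.
have a0 : 0 < m%:R :> R by rewrite ltr0n.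
rewrite -mulrA.
apply: le_trans (ler_wpM2r _ (IH m0)); last first.
  by apply: divr_ge0; [exact: ltW (expR_gt0 _)| exact: ltW].
have H1 : expR 2 / expR (2 + (m%:R * (m%:R + 1))^-1) <= expR 2 / ((m.+1)%:R / m%:R) ^+ (2 * m + 1) :> R.
  apply: ler_wpM2l; first exact: ltW (expR_gt0 _).
  rewrite lef_pV2 ?posrE ?expR_gt0 //; exact: pow_hi.
apply: le_trans (ler_wpM2l (ltW (expR_gt0 _)) H1).
rewrite -expRN -!expRD ler_expR -natr1.
have -> : 1 + m%:R^-1 + (2 - (2 + (m%:R * (m%:R + 1))^-1)) = 1 + (m%:R + 1)^-1 :> R.
  by field; lra.
by [].
Qed.

Lemma rho_ge_e m : (0 < m)%N -> expR 1 <= rho m.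
Proof.
move=> m0; apply: le_trans (@rho_lo m m0).
rewrite ler_expR lerDl invr_ge0; exact: ler0n.
Qed.

Lemma rho_le m : (0 < m)%N -> rho m <= expR 2.
Proof. by move=> m0; rewrite -rho1; apply: rho_mono. Qed.

Lemma fact_sq m : (0 < m)%N ->
  (m`!%:R) ^+ 2 = rho m * m%:R ^+ (2 * m + 1) / expR (2 * m%:R) :> R.
Proof.
move=> m0.
have a0 : 0 < m%:R :> R by rewrite ltr0n.
rewrite /rho; field.
by rewrite lt0r_neq0 ?expR_gt0 // expf_neq0 // lt0r_neq0.
Qed.
End S.


Section M.
Variable R : realType.

Lemma multinomE q n (u : 'I_q -> R) t :
  multinom n u t = n`!%:R * \prod_(i < q) (u i ^+ t i / (t i)`!%:R).
Proof. by rewrite /multinom prodf_div mulrA mulrAC. Qed.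

Lemma M2_bound q (u : 'I_q -> R) n (t : 'I_q -> nat) : (0 < n)%N ->
  (\sum_(i < q) t i)%N = n -> (forall i, 0 <= u i) ->
  multinom n u t ^+ 2 <= rho R n * n%:R *
    (\prod_(i < q) (if t i == 0%N then 1 else (rho R n * (t i)%:R)^-1)) *
    \prod_(i < q) ((n%:R * u i / (t i)%:R) ^+ t i) ^+ 2.
Proof.
move=> n0 ht u0.
set c := rho R n.
have c0 : 0 < c.
  apply: lt_le_trans (@rho_ge_e R n n0); exact: expR_gt0.
have n0R : 0 < n%:R :> R by rewrite ltr0n.
rewrite multinomE exprMn -prodrXl.
have step : forall i, (u i ^+ t i / (t i)`!%:R) ^+ 2 <=
   ((n%:R * u i / (t i)%:R) ^+ t i) ^+ 2 * (expR (2 * (t i)%:R) / (n%:R ^+ t i) ^+ 2) *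
   (if t i == 0%N then 1 else (c * (t i)%:R)^-1).
  move=> i.
  case: (t i =P 0%N) => [-> | ti0].
    by rewrite !expr0 fact0 mulr0 expR0 !expr1n mulr1n divr1 !mulr1.
  have ti : (0 < t i)%N by rewrite lt0n; apply/eqP.
  have tiR : 0 < (t i)%:R :> R by rewrite ltr0n.
  have tn : (t i <= n)%N by rewrite -ht (bigD1 i) //= leq_addr.
  have hc : c <= rho R (t i) by apply: rho_mono.
  have hf := @fact_sq R (t i) ti.
  have hlow : c * (t i)%:R ^+ (2 * t i + 1) / expR (2 * (t i)%:R) <= (t i)`!%:R ^+ 2.
    rewrite hf; apply: ler_wpM2r; first by rewrite invr_ge0 ltW // expR_gt0.
    by apply: ler_wpM2r => //; rewrite exprn_ge0 // ltW.
  have hp : 0 < c * (t i)%:R ^+ (2 * t i + 1) / expR (2 * (t i)%:R).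
    by rewrite divr_gt0 ?expR_gt0 // mulr_gt0 // exprn_gt0.
  apply: (le_trans (y := (u i ^+ t i) ^+ 2 / (c * (t i)%:R ^+ (2 * t i + 1) / expR (2 * (t i)%:R)))).
    rewrite expr_div_n; apply: ler_wpM2l; first by rewrite exprn_ge0 // exprn_ge0.
    by rewrite lef_pV2 // posrE (lt_le_trans hp hlow).
  have -> : (2 * t i + 1 = t i * 2 + 1)%N by lia.
  rewrite exprD exprM expr1 !expr_div_n exprMn.
  rewrite le_eqVlt; apply/orP; left; apply/eqP.
  field.
  by rewrite !lt0r_neq0 ?expR_gt0 ?exprn_gt0.
have hp := ler_prod (index_enum 'I_q) (P := xpredT) (fun i _ => introT andP (conj (sqr_ge0 (u i ^+ t i / (t i)`!%:R)) (step i))).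
apply: le_trans (ler_wpM2l (sqr_ge0 _) hp) _.
rewrite !big_split /=.
have -> : \prod_(i<q) expR (2 * (t i)%:R) = expR (2 * n%:R) :> R.
  by rewrite -expR_sum -mulr_sumr -natr_sum ht.
have -> : \prod_(i<q) (n%:R ^+ t i ^- 2) = (n%:R ^+ n ^+ 2)^-1 :> R.
  by rewrite prodfV prodrXl prodrXr ht.
rewrite (@fact_sq R n n0) -/c.
have -> : (2 * n + 1 = n * 2 + 1)%N by lia.
rewrite exprD exprM expr1.
rewrite le_eqVlt; apply/orP; left; apply/eqP.
field.
by rewrite !lt0r_neq0 ?expR_gt0 ?exprn_gt0.
Qed.

Lemma H_factor (n : nat) (v : R) (tt : nat) : 0 <= v ->
  ((n%:R * v / tt%:R) ^+ tt) ^+ 2 <=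
  expR (4 * (Num.sqrt (n%:R * v) * Num.sqrt tt%:R - tt%:R)).
Proof.
move=> v0.
case: (posnP tt) => [-> | tt0].
  by rewrite !expr0 expr1n sqrtr0 !mulr0 subrr mulr0 expR0.
have tR : 0 < tt%:R :> R by rewrite ltr0n.
set a := Num.sqrt (n%:R * v).
set b := Num.sqrt tt%:R.
have a0 : 0 <= a by exact: sqrtr_ge0.
have b0 : 0 < b by rewrite sqrtr_gt0.
have ea : a ^+ 2 = n%:R * v by rewrite sqr_sqrtr // mulr_ge0 // ler0n.
have eb : b ^+ 2 = tt%:R by rewrite sqr_sqrtr // ltW.
set y := a / b.
have y0 : 0 <= y by rewrite divr_ge0 // ltW.
have ey : n%:R * v / tt%:R = y ^+ 2 by rewrite /y expr_div_n ea eb.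
rewrite ey -!exprM.
have h1 : y <= expR (y - 1) by have := expR_ge1Dx (y - 1); rewrite addrC subrK.
have h2 : y ^+ tt <= expR (tt%:R * (y - 1)).
  rewrite expRM_natl; apply: lerXn2r => //; rewrite nnegrE // ltW // expR_gt0.
have -> : (2 * (tt * 2) = tt * 4)%N by lia.
rewrite exprM.
have -> : 4 * (a * b - tt%:R) = 4%:R * (tt%:R * (y - 1)).
  rewrite -eb /y; field; exact: lt0r_neq0.
rewrite expRM_natl; apply: lerXn2r => //; rewrite nnegrE ?exprn_ge0 // ltW // expR_gt0.
Qed.

Lemma H_bound q (u : 'I_q -> R) n (t : 'I_q -> nat) :
  (\sum_(i < q) t i)%N = n -> \sum_(i < q) u i = 1 -> (forall i, 0 <= u i) ->
  \prod_(i < q) ((n%:R * u i / (t i)%:R) ^+ t i) ^+ 2 <=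
  expR (- 2 * \sum_(i < q) (Num.sqrt (n%:R * u i) - Num.sqrt (t i)%:R) ^+ 2).
Proof.
move=> ht hu u0.
apply: le_trans (ler_prod (P := xpredT) (E2 := fun i => expR (4 * (Num.sqrt (n%:R * u i) * Num.sqrt (t i)%:R - (t i)%:R)))
   (index_enum 'I_q) _) _.
  by move=> i _; rewrite sqr_ge0 H_factor.
rewrite -expR_sum ler_expR.
have e : forall i, 4 * (Num.sqrt (n%:R * u i) * Num.sqrt (t i)%:R - (t i)%:R) =
   - 2 * (Num.sqrt (n%:R * u i) - Num.sqrt (t i)%:R) ^+ 2 + 2 * (n%:R * u i - (t i)%:R) :> R.
  move=> i.
  have ea : Num.sqrt (n%:R * u i) ^+ 2 = n%:R * u i by rewrite sqr_sqrtr // mulr_ge0 // ler0n.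
  have eb : Num.sqrt (t i)%:R ^+ 2 = (t i)%:R :> R by rewrite sqr_sqrtr // ler0n.
  have gen : forall (a b x z : R), a ^+ 2 = x -> b ^+ 2 = z ->
     4 * (a * b - z) = - 2 * (a - b) ^+ 2 + 2 * (x - z).
    by move=> a b x z <- <-; ring.
  exact: gen.
rewrite (eq_bigr _ (fun i _ => e i)) big_split /= -mulr_sumr -mulr_sumr sumrB -mulr_sumr hu -natr_sum ht.
by rewrite mulr1 subrr mulr0 addr0.
Qed.
End M.


Lemma goal_conv (R : realType) (M P : R) (n k : nat) : (0 < n)%N -> (0 < k)%N -> 0 < P -> 0 <= M ->
  M ^+ 2 * n%:R ^+ k.-1 * P <= 4 ->
  M <= 2 / (n%:R `^ ((k%:R - 1) / 2) * Num.sqrt P).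
Proof.
move=> n0 k0 P0 M0 hQ.
have nR : 0 < n%:R :> R by rewrite ltr0n.
set X := n%:R `^ ((k%:R - 1) / 2) * Num.sqrt P.
have X0 : 0 < X by rewrite mulr_gt0 ?powR_gt0 // sqrtr_gt0.
have X2 : X ^+ 2 = n%:R ^+ k.-1 * P.
  rewrite /X exprMn sqr_sqrtr ?ltW //; congr (_ * _).
  rewrite -[LHS](powR_mulrn _ (powR_ge0 _ _)) -powRrM -powR_mulrn ?ler0n //; congr (_ `^ _).
  rewrite -[in LHS](prednK k0) -natr1 addrK; field.
  by [].
rewrite ler_pdivlMr //.
have h : (M * X) ^+ 2 <= 4 by rewrite exprMn X2 mulrA.
have h0 : 0 <= M * X by rewrite mulr_ge0 // ltW.
nra.
Qed.

Theorem corollary2 (R : realType) (q k : nat) (u : 'I_q -> R) :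
  (2 <= q)%N -> (1 <= k <= q)%N ->
  is_prob_dist u -> #|supp u| = k ->
  exists N : nat, forall n : nat, (N <= n)%N ->
    forall t : 'I_q -> nat, in_Nqn n t ->
      multinom n u t <=
        2 / ((n%:R) `^ ((k%:R - 1) / 2) * Num.sqrt (\prod_(i in supp u) u i)).
Proof.
move=> _ /andP [k1 _] [u0 hu] hk.
case: k k1 hk => [//|k] _ hk.
set s := supp u.
set P := \prod_(i in s) u i.
have us : forall i, (i \in s) = (0 < u i) by move=> i; rewrite inE.
have u1 : forall i, u i <= 1.
  move=> i; rewrite -hu (bigD1 i) //= lerDl sumr_ge0 //.
have P0 : 0 < P by apply: prodr_gt0 => i; rewrite us.
have P1 : P <= 1 by apply: prodr_ile1 => i _; rewrite u0 u1.
have Pj : forall j, j \in s -> P <= u j.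
  move=> j js; rewrite /P (bigD1 j) //=; apply: ler_piMr => //.
  by apply: prodr_ile1 => i _; rewrite u0 u1.
set D := 4 * (P / 8) ^+ k.+2 / (k.+2)`!%:R.
have D0 : 0 < D.
  rewrite /D; apply: divr_gt0; last by rewrite ltr0n fact_gt0.
  by apply: mulr_gt0 => //; apply: exprn_gt0; apply: divr_gt0.
exists (Num.trunc (expR 2 / D)).+1.
move=> n hn t ht.
have n0 : (0 < n)%N by apply: leq_trans hn.
have nR : 0 < n%:R :> R by rewrite ltr0n.
have nD : expR 2 < n%:R * D.
  rewrite -ltr_pdivrMr //; apply: lt_le_trans (truncnS_gt _) _.
  by rewrite ler_nat.
have M0 : 0 <= multinom n u t.
  by rewrite /multinom !mulr_ge0 ?invr_ge0 ?ler0n ?prodr_ge0 // => i _; rewrite ?ler0n ?exprn_ge0.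
case: (boolP [exists i, (0 < t i)%N && (u i == 0)]).
  case/existsP => i /andP [ti /eqP ui].
  have -> : multinom n u t = 0.
    rewrite /multinom [X in _ * X](bigD1 i) //= ui expr0n.
    have -> : (t i == 0%N) = false by apply/negbTE; rewrite -lt0n.
    by rewrite !mul0r mulr0.
  by rewrite divr_ge0 // mulr_ge0 ?powR_ge0 ?sqrtr_ge0.
rewrite negb_exists => /forallP hz.
have hz' : forall i, (0 < t i)%N -> 0 < u i.
  move=> i ti; have := hz i; rewrite ti /= lt_def u0 andbT => -> //.
apply: (@goal_conv R (multinom n u t) P n k.+1 n0 _ P0 M0) => //=.
have hM := @M2_bound R q u n t n0 ht u0.
have hH := @H_bound R q u n t ht hu u0.
set c := rho R n in hM.
set G := \prod_(i < q) _ in hM.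
set H := \prod_(i < q) _ in hM hH.
set S := \sum_(i < q) _ in hH.
have ce : expR 1 <= c := @rho_ge_e R n n0.
have c2 : c <= expR 2 := @rho_le R n n0.
have e2 : 2 <= expR 1 :> R by have := expR_ge1Dx (1 : R); lra.
have c0 : 0 < c by lra.
have G0 : 0 <= G.
  apply: prodr_ge0 => i _; case: (t i == 0%N) => //.
  by rewrite invr_ge0 mulr_ge0 ?ler0n // ltW.
have H0 : 0 <= H by apply: prodr_ge0 => i _; exact: sqr_ge0.
have S0 : 0 <= S by apply: sumr_ge0 => i _; exact: sqr_ge0.
set M := multinom n u t in hM *.
case: (boolP [exists j, (j \in s) && (2 * (t j)%:R < n%:R * u j)]).
  case/existsP => j /andP [js hj].
  set x := n%:R * P / 8.
  have x0 : 0 <= x by rewrite /x divr_ge0 // mulr_ge0 // ltW.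
  have Sj : x / 2 <= S.
    have h1 : (Num.sqrt (n%:R * u j) - Num.sqrt (t j)%:R) ^+ 2 <= S.
      rewrite /S (bigD1 j) //= lerDl; apply: sumr_ge0 => i _; exact: sqr_ge0.
    apply: le_trans h1.
    set a := Num.sqrt (n%:R * u j).
    set b := Num.sqrt (t j)%:R.
    have a0 : 0 <= a by exact: sqrtr_ge0.
    have b0 : 0 <= b by exact: sqrtr_ge0.
    have ea : a ^+ 2 = n%:R * u j by rewrite sqr_sqrtr // mulr_ge0 // ?ler0n.
    have eb : b ^+ 2 = (t j)%:R :> R by rewrite sqr_sqrtr // ler0n.
    have hab : 2 * b ^+ 2 < a ^+ 2 by rewrite ea eb.
    have hb : b <= 3 / 4 * a by nra.
    have hPu : n%:R * P <= a ^+ 2 by rewrite ea; apply: ler_wpM2l; [exact: ltW|exact: Pj].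
    rewrite /x; nra.
  have G1 : G <= 1.
    apply: prodr_ile1 => i _ /=; case: eqP => [_|/eqP ti0].
      by rewrite lexx ler01.
    have tR : 1 <= (t i)%:R :> R by rewrite ler1n lt0n.
    have ct : 0 < c * (t i)%:R by apply: mulr_gt0 => //; lra.
    rewrite invr_ge0 (ltW ct) /= invf_le1 //; nra.
  have HB : H <= expR (- x).
    apply: le_trans hH _; rewrite ler_expR; lra.
  have Mb : M ^+ 2 <= expR 2 * n%:R * expR (- x).
    apply: le_trans hM _.
    apply: ler_pM; [by rewrite !mulr_ge0 // ltW| exact: H0| |exact: HB].
    rewrite -[X in _ <= X]mulr1; apply: ler_pM; [by rewrite mulr_ge0 // ltW|exact: G0| |exact: G1].
    by apply: ler_wpM2r; [exact: ltW|].
  have Ex : x ^+ k.+2 / (k.+2)`!%:R <= expR x.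
    have := expR_ge1Dxn k.+1 x0; lra.
  have xe : expR x * expR (- x) = 1 by rewrite -expRD subrr expR0.
  have hxD : x ^+ k.+2 / (k.+2)`!%:R = n%:R ^+ k.+2 * D / 4.
    rewrite /x /D !expr_div_n !exprMn. field.
    by rewrite expf_neq0 // ?lt0r_neq0 // ltr0n fact_gt0.
  have Q1 : M ^+ 2 * n%:R ^+ k * P <= expR 2 * n%:R ^+ k.+1 * expR (- x).
    apply: le_trans (ler_wpM2l (mulr_ge0 (sqr_ge0 _) (exprn_ge0 _ (ltW nR))) P1) _.
    rewrite mulr1 exprS.
    have : M ^+ 2 * n%:R ^+ k <= expR 2 * n%:R * expR (- x) * n%:R ^+ k.
      by apply: ler_wpM2r => //; rewrite exprn_ge0 // ltW.
    move=> h; apply: le_trans h _; rewrite le_eqVlt; apply/orP; left; apply/eqP.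
    by rewrite exprS; ring.
  apply: le_trans Q1 _.
  have en : expR 2 * n%:R ^+ k.+1 <= 4 * expR x.
    have hk0 : 0 < n%:R ^+ k.+1 :> R by rewrite exprn_gt0.
    have h : expR 2 * n%:R ^+ k.+1 < n%:R * D * n%:R ^+ k.+1 by rewrite ltr_pM2r.
    apply: le_trans (ltW h) _.
    apply: le_trans (ler_wpM2l _ Ex) => //.
    rewrite hxD le_eqVlt; apply/orP; left; apply/eqP.
    by rewrite (exprS _ k.+1); field.
  have ex0 : 0 < expR (- x) := expR_gt0 _.
  have := ler_wpM2r (ltW ex0) en.
  move=> h; apply: le_trans h _; rewrite -mulrA xe mulr1 //.
rewrite negb_exists => /forallP hA.
have H1 : H <= 1.
  have h : expR (-2 * S) <= expR 0 by rewrite ler_expR; nra.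
  by apply: (le_trans hH); apply: (le_trans h); rewrite expR0.
have hAi : forall i, i \in s -> n%:R * u i <= 2 * (t i)%:R.
  by move=> i isn; have := hA i; rewrite isn /= -leNgt.
have cn : 0 < c * n%:R by apply: mulr_gt0.
have Gb : G <= (2 / (c * n%:R)) ^+ k.+1 / P.
  rewrite /G (bigID (fun i => i \in s)) /=.
  rewrite [X in _ * X]big1 ?mulr1; last first.
    move=> i his /=; case: eqP => // /eqP ti0; exfalso.
    by move: his; rewrite us hz' // lt0n.
  apply: le_trans (ler_prod (E2 := fun i => 2 / (c * n%:R) * (u i)^-1) _ _) _.
    move=> i isn; have ui : 0 < u i by rewrite -us.
    have hi := hAi i isn.
    case: eqP => [ti0|/eqP ti0].
      by exfalso; move: hi; rewrite ti0 mulr0; apply/negP; rewrite -ltNge mulr_gt0.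
    have ct : 0 < c * (t i)%:R by rewrite mulr_gt0 // ltr0n lt0n.
    rewrite invr_ge0 (ltW ct) /=.
    have -> : 2 / (c * n%:R) * (u i)^-1 = (c * (n%:R * u i / 2))^-1.
      by field; rewrite !lt0r_neq0.
    have cp : 0 < c * (n%:R * u i / 2) by rewrite mulr_gt0 // divr_gt0 // mulr_gt0.
    rewrite lef_pV2 ?posrE //.
    apply: ler_wpM2l; [exact: ltW|lra].
  rewrite big_split /= prodr_const prodfV -/P.
  by rewrite -[#|_|]/#|s| hk.
have Q1 : M ^+ 2 * n%:R ^+ k * P <= c * n%:R * ((2 / (c * n%:R)) ^+ k.+1 / P) * n%:R ^+ k * P.
  apply: ler_wpM2r; first exact: ltW.
  apply: ler_wpM2r; first by rewrite exprn_ge0 // ltW.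
  apply: le_trans hM _.
  rewrite -[X in _ <= X]mulr1; apply: ler_pM => //; first by rewrite mulr_ge0 // ltW.
  by apply: ler_wpM2l => //; rewrite ltW.
apply: le_trans Q1 _.
have -> : c * n%:R * ((2 / (c * n%:R)) ^+ k.+1 / P) * n%:R ^+ k * P = 2 * (2 / c) ^+ k.
  clearbody c; rewrite exprS !expr_div_n exprMn; field.
  by rewrite !lt0r_neq0 // ?exprn_gt0 // mulr_gt0.
have : (2 / c) ^+ k <= 1.
  apply: exprn_ile1; first by rewrite divr_ge0 // ltW.
  by rewrite ler_pdivrMr // mul1r; lra.
lra.
Qed.
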